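(* If the event $E^f(t)$ holds, then $$|I_{t-1}(\mathbf{x})-EI_{t-1}(\mathbf{x})|\le c_\alpha\beta_t^{1/2}\sigma_{t-1}(\mathbf{x})\quad\text{for all }\mathbf{x}\in\mathbb{C}_t,$$ where $c_\alpha=1.328$.
   Context: Setting: $d\ge1$, $r>0$, $C\subseteq[0,r]^d$ compact, $k$ a positive semidefinite kernel with $k(\mathbf{x},\mathbf{x}')\le1$, $k(\mathbf{x},\mathbf{x})=1$ on $C$; $f$ is a sample path of $GP(0,k)$, Lipschitz with constant $L\ge1/(rd)$ in $\ell_1$-norm. Noisy observations $y_i=f(\mathbf{x}_i)+\epsilon_i$, $\epsilon_i$ i.i.d. $\mathcal{N}(0,\sigma^2)$; $\mu_{t-1}$ and $\sigma_{t-1}$ are the GP posterior mean and standard deviation given the first $t-1$ observations; $\xi^+_{t-1}$ is the incumbent (BPMI $\min_{C}\mu_{t-1}$, BSPMI $\min_{i\le t-1}\mu_{t-1}(\mathbf{x}_i)$, or BOI $\min_{i\le t-1}y_i$). $I_{t-1}(\mathbf{x})=\max\{\xi^+_{t-1}-f(\mathbf{x}),0\}$, $EI_{t-1}(\mathbf{x})=(\xi^+_{t-1}-\mu_{t-1}(\mathbf{x}))\Phi(z)+\sigma_{t-1}(\mathbf{x})\phi(z)$ with $z=(\xi^+_{t-1}-\mu_{t-1}(\mathbf{x}))/\sigma_{t-1}(\mathbf{x})$, $\phi,\Phi$ standard normal pdf/cdf. $\mathbb{C}_t\subseteq C$ is finite with $|\mathbb{C}_t|=(Lrdt^2)^d$;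 with $\delta\in(0,1)$, $\pi_t=\pi^2t^2/6$, $\beta_t=2\log(8|\mathbb{C}_t|\pi_t/\delta)$. $E^f(t)$ is the event that $|f(\mathbf{x})-\mu_{t-1}(\mathbf{x})|\le\beta_t^{1/2}\sigma_{t-1}(\mathbf{x})$ for all $\mathbf{x}\in\mathbb{C}_t$. *)

(* Defs.v *)
From HB Require Import structures.
From mathcomp Require Import all_boot all_order all_algebra.
From mathcomp Require Import all_classical all_reals all_analysis.
Set Implicit Arguments. Unset Strict Implicit. Unset Printing Implicit Defensive.
Import Order.TTheory GRing.Theory Num.Theory.
Import numFieldNormedType.Exports.
Local Open Scope classical_set_scope.
Local Open Scope ring_scope.

Section GPDefs.
Variable R : realType.

Definition std_normal_pdf (z : R) : R :=
  expR (- (z ^+ 2) / 2) / Num.sqrt (2 * pi).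

Definition std_normal_cdf (z : R) : R :=
  fine (\int[@lebesgue_measure R]_(u in `]-oo, z]) (std_normal_pdf u)%:E)%E.

Definition psd_kernel (X : Type) (k : X -> X -> R) : Prop :=
  (forall x x', k x x' = k x' x) /\
  (forall (n : nat) (xs : 'I_n -> X) (a : 'I_n -> R),
      0 <= \sum_(i < n) \sum_(j < n) a i * a j * k (xs i) (xs j)).

Variable d : nat.
Notation pt := 'rV[R]_d.

Definition l1norm (x : pt) : R := \sum_(i < d) `|x ord0 i|.

Definition gram n (k : pt -> pt -> R) (xs : 'I_n -> pt) : 'M[R]_n :=
  \matrix_(i, j) k (xs i) (xs j).

Definition kvec n (k : pt -> pt -> R) (xs : 'I_n -> pt) (x : pt) : 'cV[R]_n :=
  \col_i k (xs i) x.

Definition post_mean n (k : pt -> pt -> R) (s2 : R) (xs : 'I_n -> pt)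
  (ys : 'I_n -> R) (x : pt) : R :=
  ((kvec k xs x)^T *m invmx (gram k xs + s2%:M) *m (\col_i ys i)) ord0 ord0.

Definition post_var n (k : pt -> pt -> R) (s2 : R) (xs : 'I_n -> pt) (x : pt) : R :=
  k x x - ((kvec k xs x)^T *m invmx (gram k xs + s2%:M) *m kvec k xs x) ord0 ord0.

Definition post_sd n (k : pt -> pt -> R) (s2 : R) (xs : 'I_n -> pt) (x : pt) : R :=
  Num.sqrt (post_var k s2 xs x).

Inductive incumbent_kind := BPMI | BSPMI | BOI.

(* minima written as infima: for the finite (nonempty) sets they are minima;
   for BPMI it is min_C mu_{t-1} (an infimum if the min is not attained). *)
Definition incumbent (ik : incumbent_kind) n (C : set pt) (mu : pt -> R)
  (xs : 'I_n -> pt) (ys : 'I_n -> R) : R :=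
  match ik with
  | BPMI => inf [set mu x | x in C]
  | BSPMI => inf [set mu (xs i) | i in [set: 'I_n]]
  | BOI => inf [set ys i | i in [set: 'I_n]]
  end.

Definition improvement (xi : R) (f : pt -> R) (x : pt) : R := Num.max (xi - f x) 0.

Definition expected_improvement (xi : R) (mu sd : pt -> R) (x : pt) : R :=
  let z := (xi - mu x) / sd x in
  (xi - mu x) * std_normal_cdf z + sd x * std_normal_pdf z.

End GPDefs.

(* Main.v *)
Set Warnings "-notation-overridden,-ambiguous-paths,-notation-incompatible-prefix".
Require Import Defs.
From HB Require Import structures.
From mathcomp Require Import all_boot all_order all_algebra.
From mathcomp Require Import all_classical all_reals all_analysis.
From mathcomp Require Import ring lra measurable_realfun.
Import Order.TTheory GRing.Theory Num.Theory.
Import numFieldNormedType.Exports.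
Local Open Scope classical_set_scope.
Local Open Scope ring_scope.
Section Gauss.
Context {R : realType}.
Notation phi := (@std_normal_pdf R).
Notation mu := (@lebesgue_measure R).
Local Open Scope ereal_scope.

Lemma phiE x : phi x = normal_pdf 0 1 x.
Proof.
rewrite /normal_pdf oner_eq0 /std_normal_pdf /normal_peak /normal_fun.
by rewrite subr0 expr1n mul1r mulrC -[(pi *+ 2)%R]mulr_natl. Qed.

Lemma phi_ge0 x : (0 <= phi x)%R.
Proof. rewrite phiE; exact: normal_pdf_ge0. Qed.

Lemma phiN x : phi (- x) = phi x.
Proof. by rewrite /std_normal_pdf sqrrN. Qed.

Lemma phi_fun : phi = normal_pdf 0 1.
Proof. by apply/funext=> y; rewrite phiE. Qed.

Lemma continuous_phi : continuous phi.
Proof. rewrite phi_fun; apply: continuous_normal_pdf; by rewrite oner_eq0. Qed.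

Lemma measurable_phi : measurable_fun setT phi.
Proof. rewrite phi_fun; exact: measurable_normal_pdf. Qed.

Lemma integral_phi : \int[mu]_x (phi x)%:E = 1.
Proof. rewrite phi_fun; exact: integral_normal_pdf. Qed.

Lemma phi_le x : (phi x <= (Num.sqrt (2 * pi))^-1)%R.
Proof.
rewrite /std_normal_pdf ler_pdivrMr ?sqrtr_gt0 ?mulr_gt0 ?pi_gt0 //.
rewrite mulVf ?gt_eqF ?sqrtr_gt0 ?mulr_gt0 ?pi_gt0 //.
by rewrite -expR0 ler_expR mulNr oppr_le0 divr_ge0 ?sqr_ge0.
Qed.
Lemma is_derive_phi (u : R) : is_derive u 1%R phi (- u * phi u)%R.
Proof.
have -> : phi = (fun u => expR (- u ^+ 2 / 2) * (Num.sqrt (2 * pi))^-1)%R by [].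
apply: is_derive_eq.
rewrite !scaler0 !(addr0,add0r) /GRing.scale /= !mulr1.
field; by rewrite gt_eqF ?sqrtr_gt0 ?mulr_gt0 ?pi_gt0.
Qed.
Lemma cvg_phi : phi x @[x --> +oo%R] --> 0%R.
Proof.
have -> : phi = (fun u => expR (- (u ^+ 2 * 2^-1)) * (Num.sqrt (2 * pi))^-1)%R.
  by apply/funext => u; rewrite /std_normal_pdf mulNr.
rewrite -(mul0r (Num.sqrt (2 * pi))^-1)%R.
apply: cvgMl.
apply: (cvg_comp (fun x => x ^+ 2 * 2^-1)%R (fun x => expR (- x))); last exact: cvgr_expR.
apply: gt0_cvgMly; first by rewrite invr_gt0.
exact: cvgr_expr2.
Qed.
Lemma continuous_uphi : continuous (fun u : R => u * phi u)%R.
Proof. move=> x; apply: cvgM; [exact: cvg_id | exact: continuous_phi]. Qed.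

Lemma int_uphi w : (0 <= w)%R ->
  \int[mu]_(u in `[w, +oo[) ((u * phi u)%R)%:E = (phi w)%:E.
Proof.
move=> w0.
have := @ge0_continuous_FTC2y R (fun u => u * phi u)%R (fun u => - phi u)%R w 0%R.
rewrite sub0e EFinN oppeK; apply.
- by move=> x wx; rewrite mulr_ge0 ?phi_ge0 // (le_trans w0).
- by apply: continuous_subspaceT => x; exact: continuous_uphi.
- by rewrite -oppr0; apply: cvgN; exact: cvg_phi.
- by move=> x _; apply: ex_derive; apply: is_deriveN; exact: is_derive_phi.
- apply: cvg_at_right_filter; apply: cvgN; exact: continuous_phi.
- move=> x _; rewrite derive1E deriveN; last by apply: ex_derive; exact: is_derive_phi.
  by rewrite (@derive_val _ _ _ _ _ _ _ (is_derive_phi x)) mulNr opprK.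
Qed.
Lemma mphi (D : set R) : measurable_fun D (fun x => (phi x)%:E).
Proof. apply/measurable_EFinP; exact: measurable_funTS measurable_phi. Qed.

Lemma tail_bound w : (0 <= w)%R ->
  w%:E * \int[mu]_(u in `[w, +oo[) (phi u)%:E <= (phi w)%:E.
Proof.
move=> w0; rewrite -ge0_integralZl_EFin //; last 2 first.
- by move=> x _; rewrite lee_fin phi_ge0.
- exact: mphi.
rewrite -int_uphi //; apply: ge0_le_integral => //.
- by move=> x _; rewrite lee_fin mulr_ge0 ?phi_ge0.
- apply/measurable_EFinP; apply: measurable_funM => //; exact: measurable_funTS measurable_phi.
- apply/measurable_EFinP; apply: measurable_funM => //; exact: measurable_funTS measurable_phi.
- move=> x; rewrite /= in_itv /= andbT => wx.
  by rewrite lee_fin ler_wpM2r ?phi_ge0.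
Qed.
Lemma int_sub (A : set R) : measurable A ->
  0 <= \int[mu]_(x in A) (phi x)%:E <= 1.
Proof.
move=> mA; apply/andP; split.
  by apply: integral_ge0 => x _; rewrite lee_fin phi_ge0.
rewrite -integral_phi; apply: ge0_subset_integral => //.
- exact: mphi.
- by move=> x _; rewrite lee_fin phi_ge0.
Qed.

Lemma Phi_split z : \int[mu]_(x in `]-oo, z]) (phi x)%:E +
   \int[mu]_(x in `[z, +oo[) (phi x)%:E = 1.
Proof.
rewrite -integral_itv_obnd_cbnd; last exact: mphi.
rewrite -ge0_integral_setU //; last 3 first.
- exact: mphi.
- by move=> x _; rewrite lee_fin phi_ge0.
- by rewrite -setCitvl; exact/disj_setPCl.
by rewrite -setCitvl setUv integral_phi.
Qed.

Lemma Phi_neg z : \int[mu]_(x in `]-oo, z]) (phi x)%:E =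
   \int[mu]_(x in `[(- z)%R, +oo[) (phi x)%:E.
Proof.
rewrite -{1}(opprK z) ge0_integration_by_substitutionNy.
- by apply: eq_integral => x _; rewrite /= phiN.
- by apply: continuous_subspaceT => x; exact: continuous_phi.
- by move=> x _; exact: phi_ge0.
Qed.
Lemma fin01 {e : \bar R} : 0 <= e <= 1 -> e = (fine e)%:E /\ (0 <= fine e <= 1)%R.
Proof. by case: e => [r| |] //= /andP[a b]; split => //; apply/andP. Qed.

Lemma tau_bound z :
  (`|z * std_normal_cdf z + phi z - Num.max z 0| <= phi z)%R.
Proof.
rewrite /std_normal_cdf.
have [z0|z0] := leP 0%R z.
- have [PE /andP[P0 P1]] := fin01 (@int_sub `]-oo, z] (measurable_itv _)).
  have [QE /andP[Q0 Q1]] := fin01 (@int_sub `[z, +oo[ (measurable_itv _)).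
  have := Phi_split z; rewrite PE QE => /(congr1 fine) /= hs.
  have tb := @tail_bound z z0; rewrite QE -EFinM lee_fin in tb.
  have zq : (0 <= z * fine (\int[mu]_(x in `[z, +oo[) (phi x)%:E))%R by rewrite mulr_ge0.
  have -> : (z * fine (\int[mu]_(x in `]-oo, z]) (phi x)%:E) + phi z - z =
     phi z - z * fine (\int[mu]_(x in `[z, +oo[) (phi x)%:E))%R.
    move: hs; move: (fine _) (fine _) => a b hs.
    have -> : a = (1 - b)%R by rewrite -hs; ring.
    ring.
  by rewrite ger0_norm ?subr_ge0 // lerBlDr lerDl.
- have [PE /andP[P0 P1]] := fin01 (@int_sub `]-oo, z] (measurable_itv _)).
  have z0' : (0 <= - z)%R by rewrite oppr_ge0 ltW.
  have tb := @tail_bound (- z)%R z0'; rewrite -Phi_neg PE -EFinM lee_fin phiN in tb.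
  have zq : (0 <= - z * fine (\int[mu]_(x in `]-oo, z]) (phi x)%:E))%R by rewrite mulr_ge0.
  have -> : (z * fine (\int[mu]_(x in `]-oo, z]) (phi x)%:E) + phi z - 0 =
     phi z - - z * fine (\int[mu]_(x in `]-oo, z]) (phi x)%:E))%R.
    by ring.
  by rewrite ger0_norm ?subr_ge0 // lerBlDr lerDl.
Qed.
End Gauss.
Section Mx.
Context {R : realType} {d : nat}.
Notation pt := 'rV[R]_d.

Lemma qf n (u : 'rV[R]_n) (A : 'M[R]_n) (v : 'cV[R]_n) :
  (u *m A *m v) ord0 ord0 = \sum_i \sum_j u ord0 i * A i j * v j ord0.
Proof.
rewrite mxE; under eq_bigr => j _ do rewrite mxE big_distrl /=.
rewrite exchange_big /=; apply: eq_bigr => i _; apply: eq_bigr => j _.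
by [].
Qed.

Lemma sumsq_pos n (u : 'rV[R]_n) : u != 0 -> 0 < \sum_i u ord0 i ^+ 2.
Proof.
move=> u0; rewrite lt_def sumr_ge0 ?andbT; last by move=> i _; rewrite sqr_ge0.
apply: contra u0 => /eqP /psumr_eq0P H; apply/eqP/matrixP => i j.
rewrite ord1 mxE; apply/eqP; rewrite -sqrf_eq0; apply/eqP/H => //.
by move=> l _; rewrite sqr_ge0.
Qed.

Lemma psd_qf (k : pt -> pt -> R) n (xs : 'I_n -> pt) (u : 'rV[R]_n) :
  psd_kernel k -> 0 <= (u *m gram k xs *m u^T) ord0 ord0.
Proof.
case=> _ H; rewrite qf.
have := H n xs (fun i => u ord0 i); congr (_ <= _).
apply: eq_bigr => i _; apply: eq_bigr => j _.
by rewrite !mxE mulrAC.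
Qed.
Lemma gram_unit (k : pt -> pt -> R) n (xs : 'I_n -> pt) s2 :
  psd_kernel k -> 0 < s2 -> (gram k xs + s2%:M) \in unitmx.
Proof.
move=> pk s0; rewrite -row_free_unit -kermx_eq0; apply: contraT => K0.
set K := kermx _ in K0.
case: (pickP (fun i => row i K != 0)) => [i ui | H]; last first.
  move: K0; suff -> : K = 0 by rewrite eqxx.
  apply/row_matrixP => i; have := H i; rewrite /= => /negbFE/eqP ->.
  by rewrite row0.
set u := row i K.
have uM : u *m (gram k xs + s2%:M) = 0 by apply/sub_kermxP; exact: row_sub.
have := congr1 (fun A => (A *m u^T) ord0 ord0) uM.
rewrite /= mulmxDr mul_mx_scalar mulmxDl -scalemxAl mul0mx.
rewrite [X in X = _]mxE [X in _ + X = _]mxE [X in _ = X]mxE.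
have h1 := @psd_qf k n xs u pk.
have h2 := @sumsq_pos n u ui.
have -> : (u *m u^T) ord0 ord0 = \sum_i u ord0 i ^+ 2.
  by rewrite mxE; apply: eq_bigr => j _; rewrite !mxE expr2.
move=> E; have : 0 < (u *m gram k xs *m u^T) ord0 ord0 + s2 * \sum_i u ord0 i ^+ 2.
  by rewrite ltr_wpDl // mulr_gt0.
by rewrite E ltxx.
Qed.
Lemma sum_ext n (F : 'I_n.+1 -> R) (G : 'I_n -> R) c :
  (forall i, F (widen_ord (leqnSn n) i) = G i) -> F ord_max = c ->
  \sum_i F i = \sum_i G i + c.
Proof. by move=> hG hc; rewrite big_ord_recr /= hc; congr (_ + _); apply: eq_bigr. Qed.

Lemma post_var_pos (k : pt -> pt -> R) n (xs : 'I_n -> pt) s2 x :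
  psd_kernel k -> 0 < s2 -> k x x = 1 -> 0 < post_var k s2 xs x.
Proof.
move=> pk s0 kxx.
have Mu := @gram_unit k n xs s2 pk s0.
set M := gram k xs + s2%:M in Mu *.
set kv := kvec k xs x.
set v := invmx M *m kv.
have Mv : M *m v = kv by rewrite /v mulKVmx.
have hv i : \sum_j k (xs i) (xs j) * v j ord0 = k (xs i) x - s2 * v i ord0.
  have := congr1 (fun A : 'cV[R]_n => A i ord0) Mv; rewrite /= mulmxDl mul_scalar_mx.
  rewrite [X in X = _]mxE [X in _ + X = _]mxE /kv [X in _ = X]mxE mxE => <-.
  rewrite addrK; apply: eq_bigr => j _; by rewrite /gram [in RHS]mxE.
have PV : post_var k s2 xs x = 1 - \sum_i k (xs i) x * v i ord0.
  rewrite /post_var kxx -mulmxA -/v mxE; congr (_ - _); apply: eq_bigr => j _.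
  by rewrite !mxE.
rewrite PV.
case: (pk) => ksym H.
pose xs' (i : 'I_n.+1) := if unlift ord_max i is Some j then xs j else x.
pose a' (i : 'I_n.+1) := if unlift ord_max i is Some j then v j ord0 else -1.
have Hw (i : 'I_n) : unlift ord_max (widen_ord (leqnSn n) i) = Some i.
  have -> : widen_ord (leqnSn n) i = lift ord_max i by apply/val_inj; rewrite /= /bump leqNgt ltn_ord.
  by rewrite liftK.
have E : \sum_i \sum_j a' i * a' j * k (xs' i) (xs' j) =
    \sum_i (\sum_j v i ord0 * v j ord0 * k (xs i) (xs j) + v i ord0 * -1 * k (xs i) x)
    + (\sum_j -1 * v j ord0 * k x (xs j) + (-1) * (-1) * k x x).
  apply: sum_ext => [i|]; apply: sum_ext => [j|]; by rewrite /a' /xs' ?Hw ?unlift_none.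
have := H n.+1 xs' a'; rewrite E.
have T1 i : \sum_j v i ord0 * v j ord0 * k (xs i) (xs j) + v i ord0 * -1 * k (xs i) x
    = - (s2 * v i ord0 ^+ 2).
  rewrite (_ : \sum_j _ = v i ord0 * \sum_j k (xs i) (xs j) * v j ord0); last first.
    by rewrite mulr_sumr; apply: eq_bigr => j _; ring.
  rewrite hv; ring.
have T2 j : -1 * v j ord0 * k x (xs j) = - (k (xs j) x * v j ord0) by rewrite ksym; ring.
rewrite (eq_bigr _ (fun i _ => T1 i)) (eq_bigr _ (fun j _ => T2 j)) !sumrN kxx -mulr_sumr.
have W0 : 0 <= \sum_i v i ord0 ^+ 2 by apply: sumr_ge0 => i _; rewrite sqr_ge0.
rewrite le_eqVlt in W0; case/orP: W0 => [/eqP W0 | Wp].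
  have vi i : v i ord0 = 0.
    apply/eqP; rewrite -sqrf_eq0; apply/eqP.
    move/esym/psumr_eq0P: W0 => -> // j _; exact: sqr_ge0.
  by move=> _; rewrite big1 ?subr0 ?ltr01 // => i _; rewrite vi mulr0.
have := mulr_gt0 s0 Wp; lra.
Qed.
End Mx.
Section B.
Context {R : realType}.

Lemma expR15 : expR (5%:R^-1 : R) <= 5%:R / 4%:R.
Proof.
have h := expR_ge1Dx (- 5%:R^-1 : R).
rewrite expRN in h.
have e0 : (0 : R) < expR 5%:R^-1 by apply: expR_gt0.
rewrite -(invrK (expR _)) -[X in _ <= X]invf_div lef_pV2 ?posrE ?divr_gt0 ?invr_gt0 //.
by move: h; rewrite (_ : 1 - 5%:R^-1 = 4%:R / 5%:R :> R) //; field.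
Qed.

Lemma ln_bound {y : R} : 16%:R / 3%:R <= y -> 7%:R / 5%:R <= ln y.
Proof.
move=> hy.
have y0 : 0 < y by apply: lt_le_trans hy; rewrite divr_gt0.
rewrite -[X in X <= _]expRK ler_ln ?posrE ?expR_gt0 //.
apply: le_trans hy.
rewrite expRM_natl.
apply: le_trans (_ : (5%:R / 4%:R) ^+ 7 <= _).
  by rewrite lerXn2r ?nnegrE ?expR_ge0 ?divr_ge0 // expR15.
rewrite !exprS expr0; lra.
Qed.
Lemma beta_bound (N t : nat) (delta : R) : (0 < N)%N -> (1 <= t)%N -> 0 < delta < 1 ->
  (Num.sqrt (2 * pi))^-1 <=
   (328%:R / 1000%:R) * Num.sqrt (2 * ln (8 * N%:R * (pi ^+ 2 * t%:R ^+ 2 / 6) / delta)).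
Proof.
move=> N0 t1 /andP[d0 d1].
have p2 : 2 <= pi :> R := @pi_ge2 R.
have N1 : 1 <= N%:R :> R by rewrite ler1n.
have T1 : 1 <= t%:R :> R by rewrite ler1n.
have P4 : 4 <= pi ^+ 2 :> R by rewrite expr2; nra.
have T2 : 1 <= t%:R ^+ 2 :> R by rewrite expr2; nra.
set X := 8 * N%:R * (pi ^+ 2 * t%:R ^+ 2 / 6).
have PT : 4 * 1 <= pi ^+ 2 * t%:R ^+ 2 :> R by apply: ler_pM.
have NPT : 1 * (4 * 1) <= N%:R * (pi ^+ 2 * t%:R ^+ 2) :> R by apply: ler_pM.
have X1 : 16%:R / 3%:R <= X by rewrite /X; lra.
have XY : X <= X / delta.
  by rewrite ler_pdivlMr // ler_piMr ?ltW //; lra.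
have lb := ln_bound (le_trans X1 XY).
set beta := 2 * ln (X / delta).
have b1 : 14%:R / 5%:R <= beta by rewrite /beta; lra.
have sp : 0 < Num.sqrt (2 * pi) :> R by rewrite sqrtr_gt0 mulr_gt0 ?pi_gt0.
rewrite -[_^-1]mul1r ler_pdivrMr // -(mulrA (328%:R / 1000%:R)) -sqrtrM; last by lra.
have h : (33%:R / 10%:R) ^+ 2 <= beta * (2 * pi) by rewrite expr2; nra.
have : 33%:R / 10%:R <= Num.sqrt (beta * (2 * pi)).
  by rewrite -[X in X <= _]ger0_norm ?divr_ge0 // -sqrtr_sqr ler_sqrt // (le_trans _ h) ?sqr_ge0.
move=> hs; nra.
Qed.
End B.

Lemma maxdiff {R : realType} (p q : R) : `|Num.max p 0 - Num.max q 0| <= `|p - q|.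
Proof.
have h1 := ler_norm (p - q); have h2 := ler_norm (q - p); rewrite distrC in h2.
rewrite ler_norml; case: (leP p 0); case: (leP q 0) => *; apply/andP; split; lra.
Qed.

Theorem mainTheorem16 (R : realType) (d : nat) (r : R) (C : set 'rV[R]_d)
  (k : 'rV[R]_d -> 'rV[R]_d -> R) (f : 'rV[R]_d -> R) (L : R)
  (s2 : R) (t : nat) (xs : 'I_t.-1 -> 'rV[R]_d) (eps : 'I_t.-1 -> R)
  (ik : incumbent_kind) (Ct : seq 'rV[R]_d) (delta : R) :
  (1 <= d)%N -> 0 < r ->
  compact C -> (forall x, C x -> forall i, 0 <= x ord0 i <= r) ->
  psd_kernel k ->
  (forall x x', C x -> C x' -> k x x' <= 1) ->
  (forall x, C x -> k x x = 1) ->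
  1 / (r * d%:R) <= L ->
  (forall x x', C x -> C x' -> `|f x - f x'| <= L * l1norm (x - x')) ->
  0 < s2 ->
  (1 <= t)%N ->
  (ik <> BPMI -> (2 <= t)%N) ->
  (forall i, C (xs i)) ->
  {subset Ct <= C} -> uniq Ct ->
  (size Ct)%:R = (L * r * d%:R * (t%:R) ^+ 2) ^+ d ->
  0 < delta < 1 ->
  let ys := fun i => f (xs i) + eps i in
  let mu := post_mean k s2 xs ys in
  let sd := post_sd k s2 xs in
  let xi := incumbent ik C mu xs ys in
  let pit := pi ^+ 2 * (t%:R) ^+ 2 / 6 in
  let beta := 2 * ln (8 * (size Ct)%:R * pit / delta) in
  (* the event E^f(t) *)
  (forall x, x \in Ct -> `|f x - mu x| <= Num.sqrt beta * sd x) ->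
  forall x, x \in Ct ->
    `|improvement xi f x - expected_improvement xi mu sd x|
      <= (1328%:R / 1000%:R) * Num.sqrt beta * sd x.
Proof.
move=> d1 r0 cC Cbox pk kle1 kdiag Lb Lip s20 t1 ikt xsC CtC uCt sizeCt dl.
move=> ys mu sd xi pit beta Ef x xCt.
have kxx : k x x = 1 := kdiag x (set_mem (CtC x xCt)).
have sp : 0 < sd x by rewrite /sd /post_sd sqrtr_gt0; exact: post_var_pos.
have Ex := Ef x xCt.
have N0 : (0 < size Ct)%N by move: xCt; case: (Ct).
have bb : (Num.sqrt (2 * pi))^-1 <= 328%:R / 1000%:R * Num.sqrt beta :=
  @beta_bound R (size Ct) t delta N0 t1 dl.
rewrite /improvement /expected_improvement /=.
set z := (xi - mu x) / sd x.
have tb := tau_bound z.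
have pl := phi_le z.
have aE : xi - mu x = sd x * z by rewrite /z mulrCA divff ?gt_eqF // mulr1.
have hX : `|Num.max (xi - f x) 0 - Num.max (xi - mu x) 0| <= Num.sqrt beta * sd x.
  apply: le_trans (maxdiff _ _) _.
  by rewrite (_ : xi - f x - (xi - mu x) = - (f x - mu x)) ?normrN //; ring.
have mE : Num.max (sd x * z) 0 = sd x * Num.max z 0 by rewrite maxr_pMr ?ltW ?mulr0.
have hY : `|Num.max (xi - mu x) 0 - ((xi - mu x) * std_normal_cdf z + sd x * std_normal_pdf z)|
    <= sd x * std_normal_pdf z.
  rewrite aE mE -mulrA -mulrDr -mulrBr normrM gtr0_norm // ler_pM2l //.
  by rewrite distrC.
have h3 : sd x * std_normal_pdf z <= sd x * (328%:R / 1000%:R * Num.sqrt beta).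
  by rewrite ler_pM2l // (le_trans pl bb).
set I := Num.max (xi - f x) 0.
set EI := (xi - mu x) * std_normal_cdf z + sd x * std_normal_pdf z.
have -> : I - EI = (I - Num.max (xi - mu x) 0) + (Num.max (xi - mu x) 0 - EI).
  by ring.
apply: le_trans (ler_normD _ _) _.
have e : 1328%:R / 1000%:R * Num.sqrt beta * sd x =
   Num.sqrt beta * sd x + sd x * (328%:R / 1000%:R * Num.sqrt beta) :> R.
  by field.
rewrite e; exact: lerD (le_trans hY h3).
Qed.
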